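(* Let $t$ be a positive integer, $r$ a positive integer and $g\in\{0,1\}$. Let $$A_{r,g}(z)=\sum_{m=0}^{r}\binom{r-g+\frac14}{m}\binom{2r-g-m}{r-g}(-z)^m,\qquad B_{r,g}(z)=\sum_{m=0}^{r-g}\binom{r-\frac14}{m}\binom{2r-g-m}{r}(-z)^m,$$ and define the binary forms $A^*_{r,g}(X,Y)=X^{r}A_{r,g}(Y/X)$ and $B^*_{r,g}(X,Y)=X^{r-g}B_{r,g}(Y/X)$. For integers $x,y$ put $\Xi(x,y)=4(1+\sqrt{-t})(x-\sqrt{-t}\,y)^4$ and $H(x,y)=4(\sqrt{-t}-1)(x+\sqrt{-t}\,y)^4$. Then for every pair of integers $(x,y)$, both $A^*_{r,g}\big(\Xi(x,y),\,\Xi(x,y)-H(x,y)\big)$ and $B^*_{r,g}\big(\Xi(x,y),\,\Xi(x,y)-H(x,y)\big)$ are algebraic integers in $\mathbb{Q}(\sqrt{-t})$.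
   Context: For real $a$ and a nonnegative integer $m$, $\binom{a}{m}=a(a-1)\cdots(a-m+1)/m!$. The degrees of $A_{r,g}$ and $B_{r,g}$ are $r$ and $r-g$ respectively. $\Xi$ and $H$ are the fourth powers $\xi^4,\eta^4$ of the resolvent forms; one has $\Xi-H=8P(x,y)$ with $P(x,y)=x^{4}+4tx^{3}y-6tx^{2}y^{2}-4t^{2}xy^{3}+t^{2}y^{4}$. *)

(* Defs.v *)
From HB Require Import structures.
From mathcomp Require Import all_boot all_order all_algebra all_field.
Set Implicit Arguments. Unset Strict Implicit. Unset Printing Implicit Defensive.
Import Order.TTheory GRing.Theory Num.Theory.
Local Open Scope ring_scope.

Definition gbinom (a : algC) (m : nat) : algC :=
  (\prod_(i < m) (a - i%:R)) / (m`!)%:R.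

Definition acoef (r g m : nat) : algC :=
  gbinom ((r - g)%:R + 1/4) m * ('C(2 * r - g - m, r - g))%:R.
Definition bcoef (r g m : nat) : algC :=
  gbinom (r%:R - 1/4) m * ('C(2 * r - g - m, r))%:R.

Definition A_rg (r g : nat) (z : algC) : algC :=
  \sum_(m < r.+1) acoef r g m * (- z) ^+ m.
Definition B_rg (r g : nat) (z : algC) : algC :=
  \sum_(m < (r - g).+1) bcoef r g m * (- z) ^+ m.

(* Homogenizations as binary forms: A*(X,Y) = X^r A(Y/X), B*(X,Y) = X^(r-g) B(Y/X) *)
Definition Astar (r g : nat) (X Y : algC) : algC :=
  \sum_(m < r.+1) acoef r g m * (- Y) ^+ m * X ^+ (r - m).
Definition Bstar (r g : nat) (X Y : algC) : algC :=
  \sum_(m < (r - g).+1) bcoef r g m * (- Y) ^+ m * X ^+ (r - g - m).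

Definition sqrtmt (t : nat) : algC := sqrtC (- t%:R).

Definition Xi (t : nat) (x y : int) : algC :=
  4 * (1 + sqrtmt t) * (x%:~R - sqrtmt t * y%:~R) ^+ 4.
Definition Hf (t : nat) (x y : int) : algC :=
  4 * (sqrtmt t - 1) * (x%:~R + sqrtmt t * y%:~R) ^+ 4.

Definition in_Qsqrt (t : nat) (z : algC) : Prop :=
  exists a b : rat, z = ratr a + ratr b * sqrtmt t.

(* Main.v *)
Require Import Defs.
From HB Require Import structures.
From mathcomp Require Import all_boot all_order all_algebra all_field.
From mathcomp Require Import zify ring.
Import Order.TTheory GRing.Theory Num.Theory.
Local Open Scope ring_scope.
Lemma sum_half (m n : nat) :
  (\sum_(1 <= k < n.+1) m %/ 2 ^ k + m %/ 2 ^ n <= m)%N.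
Proof.
elim: n => [|n IH]; first by rewrite big_geq // expn0 divn1.
rewrite big_nat_recr //= expnSr divnMA.
have := leq_trunc_div (m %/ 2 ^ n) 2.
move: IH; set S := (\sum_(_ <= _ < _) _)%N; set a := (m %/ 2 ^ n)%N.
clearbody S a; lia.
Qed.

Lemma logfact (m : nat) : (logn 2 m`! <= m)%N.
Proof. rewrite logn_fact //; apply: leq_trans (sum_half m m); exact: leq_addr. Qed.

Lemma prod_cong (M : int) (m : nat) (a b : nat -> int) :
  exists q, \prod_(i < m) (a i + M * b i) = \prod_(i < m) a i + M * q.
Proof.
elim: m => [|m [q IH]]; first by exists 0; rewrite !big_ord0; ring.
exists (q * (a m + M * b m) + (\prod_(i < m) a i) * b m).
rewrite !big_ord_recr /= IH; ring.
Qed.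
Lemma odd_dvd (m M : nat) (c : int) : odd M -> (M %| m`!)%N ->
  (M%:Z %| \prod_(i < m) (c - 4 * i%:Z))%Z.
Proof.
move=> oM dM.
have hM : M = (M./2).*2.+1 by rewrite -[in LHS](odd_double_half M) oM.
set a := M./2 in hM.
have hMz : M%:Z = 2 * a%:Z + 1 by rewrite hM; lia.
set k0 : int := - c * a%:Z * (a%:Z + 1).
set N : int := (`|k0|%N)%:Z + m%:Z.
set k : int := k0 + M%:Z * N.
set j : int := c * M%:Z - 4 * N.
have ec : c = 4 * k + M%:Z * j.
  rewrite /k /j /k0 hMz; ring.
have hk : m%:Z <= k.
  rewrite /k /N; clearbody k0; rewrite hMz; nia.
have k0' : 0 <= k by lia.
set kn := `|k|%N.
have ekn : k = kn%:Z by rewrite /kn gez0_abs.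
have [q eq] := prod_cong M%:Z m (fun i => 4 * (kn%:Z - i%:Z)) (fun _ => j).
have -> : \prod_(i < m) (c - 4 * i%:Z) = \prod_(i < m) (4 * (kn%:Z - i%:Z) + M%:Z * j).
  apply: eq_bigr => i _; rewrite ec ekn mulrBr; ring.
rewrite eq rpredD //; last by apply: dvdz_mulr; exact: dvdzz.
have -> : \prod_(i < m) (4 * (kn%:Z - i%:Z)) = 4 ^+ m * (kn ^_ m)%:Z.
  rewrite big_split /= prodr_const card_ord; congr (_ * _).
  rewrite ffact_prod (big_morph Posz PoszM (erefl 1%:Z)).
  apply: eq_bigr => i _; rewrite subzn //.
  have := ltn_ord i; rewrite ekn in hk; lia.
apply: dvdz_mull; rewrite -bin_ffact PoszM; apply: dvdz_mull.
by rewrite dvdzE /=.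
Qed.

Lemma fact_dvd (m : nat) (c : int) :
  ((m`!)%:Z %| 2 ^+ m * \prod_(i < m) (c - 4 * i%:Z))%Z.
Proof.
have [M cM hM] := pfactor_coprime (isT : prime 2) (fact_gt0 m).
have hd := @odd_dvd m M c.
rewrite dvdzE abszM abszX /= hM Gauss_dvd; last by rewrite coprime_sym coprimeXl.
apply/andP; split.
  apply: dvdn_mull; have := hd; rewrite dvdzE /=; apply.
    by rewrite -coprime2n.
  by rewrite hM dvdn_mulr.
apply: dvdn_mulr; apply: dvdn_exp2l; exact: logfact.
Qed.

Lemma binom8 (m : nat) (c : int) :
  exists q : int, 8 ^+ m * gbinom (c%:~R / 4) m = q%:~R.
Proof.
have /dvdzP [q hq] := fact_dvd m c.
exists q.
have e1 : 8 ^+ m * \prod_(i < m) (c%:~R / 4 - i%:R : algC)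
          = (2 ^+ m * \prod_(i < m) (c - 4 * i%:Z))%:~R.
  rewrite rmorphM rmorphXn rmorph_prod /=.
  have -> : (8 : algC) ^+ m = 2 ^+ m * 4 ^+ m by rewrite -exprMn; congr (_ ^+ _); ring.
  rewrite -mulrA; congr (_ * _).
  rewrite -[in X in X * _](card_ord m) -prodr_const -big_split /=.
  by apply: eq_bigr => i _; rewrite rmorphB rmorphM /=; field.
rewrite /gbinom mulrA e1 hq rmorphM /= -[X in _ / X]/((m`!%:Z)%:~R).
by rewrite mulfK // intr_eq0 -lt0n fact_gt0.
Qed.

Definition Zs (t : nat) (z : algC) := exists a b : int, z = a%:~R + b%:~R * sqrtmt t.

Section Z.
Variable t : nat.
Let s := sqrtmt t.
Lemma ht : (t%:Z)%:~R = - s ^+ 2 :> algC.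
Proof. by rewrite /s /sqrtmt sqrtCK opprK. Qed.

Lemma htn : (t%:R : algC) = - s ^+ 2.
Proof. by rewrite /s /sqrtmt sqrtCK opprK. Qed.

Lemma Zs_int (n : int) : Zs t n%:~R.
Proof. by exists n, 0; rewrite mul0r addr0. Qed.
Lemma Zs_s : Zs t s.
Proof. by exists 0, 1; rewrite add0r mul1r. Qed.
Lemma Zs_add u v : Zs t u -> Zs t v -> Zs t (u + v).
Proof.
move=> [a [b ->]] [a' [b' ->]]; exists (a + a'), (b + b').
rewrite !rmorphD /=; ring.
Qed.
Lemma Zs_opp u : Zs t u -> Zs t (- u).
Proof. move=> [a [b ->]]; exists (- a), (- b); rewrite !rmorphN /=; ring. Qed.
Lemma Zs_mul u v : Zs t u -> Zs t v -> Zs t (u * v).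
Proof.
move=> [a [b ->]] [a' [b' ->]]; exists (a * a' - t%:Z * b * b'), (a * b' + b * a').
rewrite !(rmorphD, rmorphB, rmorphN, rmorphM) /= ?ht ?htn -/s; ring.
Qed.
Lemma Zs_exp u n : Zs t u -> Zs t (u ^+ n).
Proof.
move=> hu; elim: n => [|n IH]; first by rewrite expr0; exact: (Zs_int 1).
by rewrite exprS; apply: Zs_mul.
Qed.
Lemma Zs_sum n (F : 'I_n -> algC) : (forall i, Zs t (F i)) -> Zs t (\sum_(i < n) F i).
Proof.
move=> hF; apply: (big_ind (Zs t)) => //; first exact: (Zs_int 0).
exact: Zs_add.
Qed.
Lemma s_Aint : s \in Aint.
Proof.
have h1 : root ('X^2 + (t%:R)%:P) s by rewrite rootE !hornerE htn addrN.
have h2 : ('X^2 + (t%:R)%:P : {poly algC}) \is monic by rewrite monicXnaddC.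
have h3 : ('X^2 + (t%:R)%:P : {poly algC}) \is a polyOver Num.int.
  by rewrite polyOverXnaddC natr_int.
exact: (root_monic_Aint h1 h2 h3).
Qed.
Lemma Zs_Aint u : Zs t u -> u \in Aint.
Proof.
have hi : forall n : int, (n%:~R : algC) \in Aint by move=> n; apply: Aint_Cint; exact: intr_int.
move=> [a [b ->]]; apply: rpredD => //; apply: rpredM => //; exact: s_Aint.
Qed.
Lemma Zs_Q u : Zs t u -> in_Qsqrt t u.
Proof. by move=> [a [b ->]]; exists a%:Q, b%:Q; rewrite !rmorph_int. Qed.
End Z.

Lemma Zs_nat t (n : nat) : Zs t n%:R.
Proof. exact: (Zs_int t n). Qed.

Lemma term_Zs t (c : int) (i : nat) (a : algC) (C : nat) (P : int) (X : algC) (n : nat) :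
  a = c%:~R / 4 -> Zs t X ->
  Zs t (gbinom a i * C%:R * (- (8 * P%:~R)) ^+ i * X ^+ n).
Proof.
move=> -> hX; have [q hq] := binom8 i c.
have -> : gbinom (c%:~R / 4) i * C%:R * (- (8 * P%:~R)) ^+ i * X ^+ n
   = (8 ^+ i * gbinom (c%:~R / 4) i) * C%:R * (- P%:~R) ^+ i * X ^+ n.
  by rewrite -mulrN exprMn; ring.
rewrite hq; apply: Zs_mul; last exact: Zs_exp.
apply: Zs_mul; last by apply: Zs_exp; apply: Zs_opp; exact: Zs_int.
by apply: Zs_mul; [exact: Zs_int | exact: Zs_nat].
Qed.

Theorem lemma5p1 (t r g : nat) (ht : (0 < t)%N) (hr : (0 < r)%N) (hg : (g <= 1)%N)
  (x y : int) :
  (Astar r g (Xi t x y) (Xi t x y - Hf t x y) \in Aint /\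
   in_Qsqrt t (Astar r g (Xi t x y) (Xi t x y - Hf t x y))) /\
  (Bstar r g (Xi t x y) (Xi t x y - Hf t x y) \in Aint /\
   in_Qsqrt t (Bstar r g (Xi t x y) (Xi t x y - Hf t x y))).
Proof.
have htn' := htn t.
set s := sqrtmt t in htn' *.
set Pz : int := x ^+ 4 + 4 * t%:Z * x ^+ 3 * y - 6 * t%:Z * x ^+ 2 * y ^+ 2
  - 4 * t%:Z ^+ 2 * x * y ^+ 3 + t%:Z ^+ 2 * y ^+ 4.
have htz : ((t%:Z)%:~R : algC) = - s ^+ 2 by rewrite -htn'.
have hY : Xi t x y - Hf t x y = 8 * Pz%:~R.
  rewrite /Xi /Hf -/s /Pz !(rmorphD, rmorphB, rmorphN, rmorphM, rmorphXn) /= htz.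
  ring.
have hX : Zs t (Xi t x y).
  rewrite /Xi; apply: Zs_mul; last apply: Zs_exp.
    apply: Zs_mul; first exact: (Zs_nat t 4).
    by apply: Zs_add; [exact: (Zs_nat t 1) | exact: Zs_s].
  apply: Zs_add; first exact: Zs_int.
  by apply: Zs_opp; apply: Zs_mul; [exact: Zs_s | exact: Zs_int].
have hA : Zs t (Astar r g (Xi t x y) (Xi t x y - Hf t x y)).
  rewrite /Astar hY; apply: Zs_sum => i; rewrite /acoef.
  apply: (@term_Zs t (4 * (r - g) + 1)%N%:Z) => //.
  rewrite -[((4 * (r - g) + 1)%N%:Z)%:~R]/((4 * (r - g) + 1)%N%:R) natrD natrM.
  by field.
have hB : Zs t (Bstar r g (Xi t x y) (Xi t x y - Hf t x y)).
  rewrite /Bstar hY; apply: Zs_sum => i; rewrite /bcoef.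
  apply: (@term_Zs t (4 * r%:Z - 1)) => //.
  by rewrite rmorphB rmorphM /=; field.
split; split; [exact: Zs_Aint hA | exact: Zs_Q hA | exact: Zs_Aint hB | exact: Zs_Q hB].
Qed.
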